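(* Let $\Phi$ be an irreducible crystallographic root system with simple system $S$ and positive system $\Phi^+$, let $k$ be a positive integer, and let $\mathcal{I}=(I_1,\ldots,I_k)$ be a geometric chain of $k$ ideals in the root poset of $\Phi$. Define $\underline{\mathcal{I}}=(\underline{I}_1,\ldots,\underline{I}_{k+1})$ by $\underline{I}_i=I_i$ for $i\in\{1,\ldots,k\}$ and $\underline{I}_{k+1}=\bigcup_{i+j=k+1}\big((I_i+I_j)\cap\Phi^+\big)\cup I_k\cup S$. Then $\underline{\mathcal{I}}$ is a positive geometric chain of $k+1$ ideals, and the bounded dominant region $\underline{R}=\theta^{-1}(\underline{\mathcal{I}})$ of the $(k+1)$-Catalan arrangement of $\Phi$ is contained in the dominant region $R=\theta^{-1}(\mathcal{I})$ of the $k$-Catalan arrangement.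
   Context: $\Phi$ lives in a real Euclidean space $V$ with inner product $\langle\cdot,\cdot\rangle$; $H_\alpha^r=\{x\in V\mid\langle x,\alpha\rangle=r\}$. For a positive integer $K$, the $K$-Catalan arrangement consists of $H_\alpha^r$, $\alpha\in\Phi$, $r\in\{0,\ldots,K\}$; regions are connected components of its complement; $R$ is dominant if $\langle x,\alpha\rangle>0$ for all $\alpha\in\Phi^+$, $x\in R$. The root poset is $\Phi^+$ with $\alpha\le\beta$ iff $\beta-\alpha$ is a nonnegative integer combination of $S$; ideals are down-closed subsets, order filters up-closed subsets. Sums of sets are sumsets $A+B=\{a+b\mid a\in A,b\in B\}$. An ascending chain $I_1\subseteq\cdots\subseteq I_K$ of ideals, with corresponding order filters $J_i=\Phi^+\setminus I_i$, is geometric if $(I_i+I_j)\cap\Phi^+\subseteq I_{i+j}$ for all $i,j\in\{0,\ldots,K\}$ with $i+j\le K$, and $(J_i+J_j)\cap\Phi^+\subseteq J_{i+j}$ for all $i,j\in\{0,\ldots,K\}$, where $I_0=\varnothing$, $J_0=\Phi^+$ and $J_i=J_K$ for $i>K$. It is positive if $S\subseteq I_K$. For a dominant region $R$ of the $K$-Catalan arrangement, $\theta(R)=(I_1,\ldots,I_K)$ with $I_i=\{\alpha\in\Phi^+\mid\langle x,\alpha\rangle<i\text{ for all }x\in R\}$; it is known that $\theta$ is a bijection from dominant regions of the $K$-Catalan arrangement to geometric chains of $K$ ideals, restricting to a bijection between bounded dominant regions and positive geometric chains. In the union defining $\underline{I}_{k+1}$, $i,j$ range over $\{0,\ldots,k\}$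 with $I_0=\varnothing$. *)

(* Defs.v *)
From mathcomp Require Import all_boot all_order all_algebra.
From mathcomp Require Import all_classical all_reals all_analysis.
Import numFieldNormedType.Exports.
Import Order.TTheory GRing.Theory Num.Theory.

Set Implicit Arguments.
Unset Strict Implicit.
Unset Printing Implicit Defensive.

Local Open Scope classical_set_scope.
Local Open Scope ring_scope.

Definition dotv (R : realType) (n : nat) (x y : 'rV[R]_n) : R :=
  \sum_(i < n) x 0 i * y 0 i.

Definition is_root_system (R : realType) (n : nat) (Phi : seq 'rV[R]_n) : Prop :=
  [/\ (0 \notin Phi),
      (forall v : 'rV[R]_n, exists c : 'I_(size Phi) -> R,
          v = \sum_(i < size Phi) c i *: Phi`_i),
      (forall a, a \in Phi -> forall c : R, c *: a \in Phi -> c = 1 \/ c = -1),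
      (forall a b, a \in Phi -> b \in Phi ->
          b - (2 * dotv b a / dotv a a) *: a \in Phi) &
      (forall a b, a \in Phi -> b \in Phi ->
          exists z : int, 2 * dotv b a / dotv a a = z%:~R)].

Definition irreducible_rs (R : realType) (n : nat) (Phi : seq 'rV[R]_n) : Prop :=
  ~ (exists A B : set 'rV[R]_n,
        [/\ A !=set0, B !=set0, [set x | x \in Phi] = A `|` B &
            forall a b, A a -> B b -> dotv a b = 0]).

Definition is_simple_system (R : realType) (n : nat) (Phi S : seq 'rV[R]_n) : Prop :=
  [/\ {subset S <= Phi}, free S &
      forall a, a \in Phi -> exists c : 'I_(size S) -> R,
        a = \sum_(i < size S) c i *: S`_i /\
        ((forall i, 0 <= c i) \/ (forall i, c i <= 0))].

Definition pos_roots (R : realType) (n : nat) (Phi S : seq 'rV[R]_n) : set 'rV[R]_n :=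
  [set a | a \in Phi /\ exists c : 'I_(size S) -> R,
     (forall i, 0 <= c i) /\ a = \sum_(i < size S) c i *: S`_i].

Definition root_le (R : realType) (n : nat) (S : seq 'rV[R]_n) (a b : 'rV[R]_n) : Prop :=
  exists c : 'I_(size S) -> nat, b - a = \sum_(i < size S) (c i)%:R *: S`_i.

Definition is_ideal (R : realType) (n : nat) (P : set 'rV[R]_n) (S : seq 'rV[R]_n)
    (A : set 'rV[R]_n) : Prop :=
  A `<=` P /\ forall a b, P a -> P b -> root_le S a b -> A b -> A a.

Definition sumset (R : realType) (n : nat) (A B : set 'rV[R]_n) : set 'rV[R]_n :=
  [set x | exists a b, [/\ A a, B b & x = a + b]].

(* A chain (I_1, ..., I_K) is represented by I : nat -> set V, only indices
   1..K being relevant.  Conventions: I_0 = empty, J_0 = Phi^+, J_i = J_K for i > K. *)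
Definition Iext (R : realType) (n : nat) (I : nat -> set 'rV[R]_n) (i : nat) : set 'rV[R]_n :=
  if i == 0%N then set0 else I i.

Definition Jext (R : realType) (n : nat) (P : set 'rV[R]_n) (I : nat -> set 'rV[R]_n)
    (K i : nat) : set 'rV[R]_n :=
  if i == 0%N then P else P `\` I (minn i K).

Definition is_geometric_chain (R : realType) (n : nat) (P : set 'rV[R]_n)
    (S : seq 'rV[R]_n) (K : nat) (I : nat -> set 'rV[R]_n) : Prop :=
  [/\ (forall i, (1 <= i <= K)%N -> is_ideal P S (I i)),
      (forall i, (1 <= i < K)%N -> I i `<=` I i.+1),
      (forall i j, (i + j <= K)%N ->
          sumset (Iext I i) (Iext I j) `&` P `<=` Iext I (i + j)) &
      (forall i j, (i <= K)%N -> (j <= K)%N ->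
          sumset (Jext P I K i) (Jext P I K j) `&` P `<=` Jext P I K (i + j))].

Definition is_positive_chain (R : realType) (n : nat) (S : seq 'rV[R]_n) (K : nat)
    (I : nat -> set 'rV[R]_n) : Prop :=
  [set x | x \in S] `<=` I K.

Definition catalan_compl (R : realType) (n : nat) (Phi : seq 'rV[R]_n) (K : nat)
    : set 'rV[R]_n :=
  [set x | forall a, a \in Phi -> forall r : nat, (r <= K)%N -> dotv x a != r%:R].

Definition is_region (R : realType) (n : nat) (Phi : seq 'rV[R]_n) (K : nat)
    (Rg : set 'rV[R]_n) : Prop :=
  exists x, catalan_compl Phi K x /\ Rg = connected_component (catalan_compl Phi K) x.

Definition is_dominant (R : realType) (n : nat) (P : set 'rV[R]_n) (Rg : set 'rV[R]_n) : Prop :=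
  forall x, Rg x -> forall a, P a -> 0 < dotv x a.

Definition theta (R : realType) (n : nat) (P : set 'rV[R]_n) (Rg : set 'rV[R]_n) (i : nat)
    : set 'rV[R]_n :=
  [set a | P a /\ forall x, Rg x -> dotv x a < i%:R].

Definition underline_chain (R : realType) (n : nat) (P : set 'rV[R]_n) (S : seq 'rV[R]_n)
    (k : nat) (I : nat -> set 'rV[R]_n) (i : nat) : set 'rV[R]_n :=
  if i == k.+1 then
    [set x | exists i1 j1, [/\ (i1 <= k)%N, (j1 <= k)%N, (i1 + j1 = k.+1)%N &
               (sumset (Iext I i1) (Iext I j1) `&` P) x]]
    `|` I k `|` [set x | x \in S]
  else I i.

(* Main.v *)
Require Import Defs.
From mathcomp Require Import all_boot all_order all_algebra.
From mathcomp Require Import all_classical all_reals all_analysis.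
From mathcomp Require Import ring lra zify.
Import numFieldNormedType.Exports.
Import Order.TTheory GRing.Theory Num.Theory.
Local Open Scope classical_set_scope.
Local Open Scope ring_scope.
Set Implicit Arguments.
Unset Strict Implicit.
Unset Printing Implicit Defensive.

Section Dot.
Variables (R : realType) (n : nat).
Implicit Types x y a : 'rV[R]_n.

Lemma dotvDl x y a : dotv (x + y) a = dotv x a + dotv y a.
Proof. by rewrite /dotv -big_split; apply: eq_bigr => i _; rewrite mxE mulrDl. Qed.
Lemma dotvZl (c : R) x a : dotv (c *: x) a = c * dotv x a.
Proof. by rewrite /dotv mulr_sumr; apply: eq_bigr => i _; rewrite mxE mulrA. Qed.
Lemma dotvNl x a : dotv (- x) a = - dotv x a.
Proof. by rewrite -scaleN1r dotvZl mulN1r. Qed.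
Lemma dotvBl x y a : dotv (x - y) a = dotv x a - dotv y a.
Proof. by rewrite dotvDl dotvNl. Qed.
Lemma dotvC x y : dotv x y = dotv y x.
Proof. by apply: eq_bigr => i _; rewrite mulrC. Qed.
Lemma dotvDr x y a : dotv a (x + y) = dotv a x + dotv a y.
Proof. by rewrite dotvC dotvDl !(dotvC a). Qed.
Lemma dotvZr (c : R) x a : dotv a (c *: x) = c * dotv a x.
Proof. by rewrite dotvC dotvZl dotvC. Qed.
Lemma dotvNr x a : dotv a (- x) = - dotv a x.
Proof. by rewrite dotvC dotvNl dotvC. Qed.
Lemma dotvBr x y a : dotv a (x - y) = dotv a x - dotv a y.
Proof. by rewrite dotvDr dotvNr. Qed.
Lemma dotv_ge0 x : 0 <= dotv x x.
Proof. by apply: sumr_ge0 => i _; rewrite -expr2 sqr_ge0. Qed.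
Lemma dotv_eq0 x : dotv x x = 0 -> x = 0.
Proof.
move=> h; apply/matrixP => i j; rewrite (ord1 i) mxE.
have hp : forall k : 'I_n, true -> 0 <= x 0 k * x 0 k by move=> k _; rewrite -expr2 sqr_ge0.
have := psumr_eq0P hp h.
move=> /(_ j isT) /eqP; rewrite mulf_eq0 orbb => /eqP //.
Qed.
Lemma dotv_gt0 x : x != 0 -> 0 < dotv x x.
Proof.
move=> nx; rewrite lt_neqAle dotv_ge0 andbT; apply/eqP => /esym/dotv_eq0.
by apply/eqP.
Qed.
Lemma dotv_sum (I : Type) (r : seq I) (F : I -> 'rV[R]_n) a :
  dotv (\sum_(i <- r) F i) a = \sum_(i <- r) dotv (F i) a.
Proof.
elim: r => [|i r IH]; first by rewrite !big_nil /dotv big1 // => j _; rewrite mxE mul0r.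
by rewrite !big_cons dotvDl IH.
Qed.
End Dot.
Ltac vring := apply/matrixP => ? ?; rewrite !mxE; ring.

Section Roots.
Variables (R : realType) (n : nat) (Phi S : seq 'rV[R]_n).
Hypothesis RS : is_root_system Phi.
Hypothesis SS : is_simple_system Phi S.
Local Notation P := (pos_roots Phi S).
Local Notation comb c := (\sum_(i < size S) c i *: S`_i).

Lemma root_neq0 a : a \in Phi -> a != 0.
Proof. by case: RS => h0 _ _ _ _ Ha; apply: contraNneq h0 => <-. Qed.

Lemma rootN a : a \in Phi -> - a \in Phi.
Proof.
move=> Ha; case: RS => _ _ _ hr _; have := hr a a Ha Ha.
have nz : dotv a a != 0 by rewrite gt_eqF // dotv_gt0 // root_neq0.
rewrite mulfK // -[2]/(1 + 1) scalerDl scale1r opprD addrA subrr add0r //.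
Qed.

Lemma ge_from (x y w : R) : 0 < y -> 2 * x / y = w -> 2 <= w -> y <= x.
Proof.
move=> y0 e w2; have e' : 2 * x = w * y by rewrite -e divfK // gt_eqF.
nra.
Qed.

Lemma int_cases (z : int) : 0 < (z%:~R : R) -> z = 1 \/ 2 <= (z%:~R : R).
Proof.
case: z => [[|[|m]]|m] //=; rewrite ?ltxx //; first by left.
- by move=> _; right; rewrite -[2]/(2%:R) ler_nat.
- by rewrite NegzE mulrNz oppr_gt0 ltNge ler0n.
Qed.

Lemma diff_root u v : u \in Phi -> v \in Phi -> 0 < dotv u v -> u != v ->
  u - v \in Phi.
Proof.
move=> Hu Hv uv nuv; case: RS => _ _ _ hr hz.
have nu := dotv_gt0 (root_neq0 Hu); have nv := dotv_gt0 (root_neq0 Hv).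
have [z1 e1] := hz v u Hv Hu; have [z2 e2] := hz u v Hu Hv.
have p1 : 0 < (z1%:~R : R) by rewrite -e1 divr_gt0 // mulr_gt0.
have p2 : 0 < (z2%:~R : R) by rewrite -e2 divr_gt0 // dotvC mulr_gt0.
case: (int_cases p1) => [z11|h1].
  by have := hr v u Hv Hu; rewrite e1 z11 scale1r.
case: (int_cases p2) => [z21|h2].
  by have := rootN (hr u v Hu Hv); rewrite e2 z21 scale1r opprB.
have l1 := ge_from nv e1 h1; have l2 := ge_from nu e2 h2.
rewrite dotvC in l2.
have : dotv (u - v) (u - v) = 0.
  apply/eqP; rewrite eq_le dotv_ge0 andbT.
  by rewrite dotvBl !dotvBr (dotvC v u); lra.
by move/dotv_eq0/eqP; rewrite subr_eq0 (negbTE nuv).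
Qed.

Lemma free_coef (k : 'I_(size S) -> R) : comb k = 0 -> forall i, k i = 0.
Proof. by case: SS => _ fS _; have := @freeP _ _ _ (in_tuple S); case: (free _) fS; last by []; move=> _ /(elimT) h; exact: h. Qed.

Definition delta (i : 'I_(size S)) := fun j : 'I_(size S) => ((j == i)%:R : R).

Lemma comb_delta i : comb (delta i) = S`_i.
Proof.
rewrite (bigD1 i) //= big1 ?addr0 /delta ?eqxx ?scale1r // => j /negbTE ->.
by rewrite scale0r.
Qed.

Lemma combD c d : comb c + comb d = comb (fun i => c i + d i).
Proof. by rewrite -big_split; apply: eq_bigr => i _; rewrite scalerDl. Qed.
Lemma combN c : - comb c = comb (fun i => - c i).
Proof. by rewrite -sumrN; apply: eq_bigr => i _; rewrite scaleNr. Qed.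

Definition nn x := exists c : 'I_(size S) -> R, (forall i, 0 <= c i) /\ x = comb c.

Lemma nnD x y : nn x -> nn y -> nn (x + y).
Proof.
move=> [c [c0 ->]] [d [d0 ->]]; exists (fun i => c i + d i); split.
  by move=> i; rewrite addr_ge0.
by rewrite combD.
Qed.

Lemma nn_nat (m : 'I_(size S) -> nat) : nn (comb (fun i => (m i)%:R)).
Proof. by exists (fun i => (m i)%:R). Qed.

Lemma PE a : P a <-> a \in Phi /\ nn a.
Proof. by []. Qed.

Lemma P_root a : P a -> a \in Phi. Proof. by case. Qed.
Lemma P_neq0 a : P a -> a != 0. Proof. by move/P_root/root_neq0. Qed.

Lemma S_P s : s \in S -> P s.
Proof.
move=> sS; case: SS => sub _ _; split; first exact: sub.
exists (delta (Ordinal (etrans (index_mem s S) sS) : 'I_(size S))); split.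
  by move=> j; rewrite /delta ler0n.
by rewrite comb_delta /= nth_index.
Qed.

Lemma root_posneg a : a \in Phi -> P a \/ P (- a).
Proof.
move=> Ha; case: SS => _ _ hs; have [c [e [h|h]]] := hs a Ha.
  by left; split => //; exists c.
right; split; first exact: rootN.
exists (fun i => - c i); split; first by move=> i; rewrite oppr_ge0.
by rewrite e combN.
Qed.

Lemma not_pos_neg a : P a -> P (- a) -> False.
Proof.
move=> Pa [_ [d [d0 ed]]]; case: Pa => Ha [c [c0 ec]].
have : comb (fun i => c i + d i) = 0 by rewrite -combD -ec -ed subrr.
move/free_coef => h.
have c00 : forall i, c i = 0.
  by move=> i; have := h i; have := c0 i; have := d0 i; lra.
move: (root_neq0 Ha); rewrite ec big1 ?eqxx // => i _; by rewrite c00 scale0r.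
Qed.

Lemma sum_not_simple a b : P a -> P b -> a + b \in S -> False.
Proof.
move=> [Ha [c [c0 ec]]] [Hb [d [d0 ed]]] sS.
pose i : 'I_(size S) := Ordinal (etrans (index_mem _ _) sS).
have Si : S`_i = a + b by rewrite /= nth_index.
have : comb (fun j => c j + d j - delta i j) = 0.
  have -> : comb (fun j => c j + d j - delta i j) =
     comb c + comb d + comb (fun j => - delta i j) by rewrite !combD.
  by rewrite -combN comb_delta -ec -ed Si subrr.
move/free_coef => h.
have hj : forall j, j != i -> c j = 0 /\ d j = 0.
  move=> j nj; have := h j; rewrite /delta (negbTE nj) subr0 => hh.
  by have := c0 j; have := d0 j; split; lra.
have ea : a = c i *: S`_i.
  rewrite ec (bigD1 i) //= big1 ?addr0 // => j /hj [-> _]; by rewrite scale0r.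
have eb : b = d i *: S`_i.
  rewrite ed (bigD1 i) //= big1 ?addr0 // => j /hj [_ ->]; by rewrite scale0r.
case: RS => _ _ red _ _; case: SS => sub _ _.
have SiP : S`_i \in Phi by apply: sub; rewrite Si.
have ci1 : c i = 1.
  by case: (red _ SiP (c i)); rewrite -?ea // => e; have := c0 i; lra.
have di1 : d i = 1.
  by case: (red _ SiP (d i)); rewrite -?eb // => e; have := d0 i; lra.
by have := h i; rewrite /delta eqxx ci1 di1 /=; lra.
Qed.

Lemma pairing a b c d : a \in Phi -> b \in Phi -> c \in Phi -> d \in Phi ->
  a + b = c + d -> a + b != 0 ->
  (a = c \/ a - c \in Phi) \/ (a = d \/ a - d \in Phi).
Proof.
move=> Ha Hb Hc Hd e nz.
have := dotv_gt0 nz; rewrite {2}e dotvDl !dotvDr => h.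
have [ac|ac] := ltP 0 (dotv a c).
  by left; have [->|ne] := eqVneq a c; [left|right; exact: diff_root].
have [bd|bd] := ltP 0 (dotv b d).
  left; have [ebd|ne] := eqVneq b d; first by left; move: e; rewrite ebd => /addIr.
  right; have := rootN (diff_root Hb Hd bd ne).
  suff -> : - (b - d) = a - c by [].
  by apply/eqP; rewrite opprB subr_eq -addrA (addrC (-c)) addrA e (addrC c d) addrK.
have [ad|ad] := ltP 0 (dotv a d).
  by right; have [->|ne] := eqVneq a d; [left|right; exact: diff_root].
have [bc|bc] := ltP 0 (dotv b c).
  right; have [ebc|ne] := eqVneq b c.
    by left; move: e; rewrite ebc [c + d]addrC => /addIr.
  right; have := rootN (diff_root Hb Hc bc ne).
  suff -> : - (b - c) = a - d by [].
  by apply/eqP; rewrite opprB subr_eq -addrA (addrC (-d)) addrA e addrK.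
by exfalso; clear e nz; lra.
Qed.


Lemma exists_pos_term (F : 'I_(size S) -> R) : 0 < \sum_i F i -> exists i, 0 < F i.
Proof.
move=> h; case: (pselect (exists i, 0 < F i)) => // nh; exfalso.
have : \sum_i F i <= 0.
  apply: sumr_le0 => i _; rewrite leNgt; apply/negP => hi; apply: nh; by exists i.
by rewrite leNgt h.
Qed.

Lemma chain_down (U : set 'rV[R]_n) :
  (forall b s, U b -> s \in S -> P (b - s) -> U (b - s)) ->
  forall a b, P a -> P b -> root_le S a b -> U b -> U a.
Proof.
move=> cl a b Pa Pb [m e].
move: {2}(\sum_i m i)%N (erefl (\sum_i m i)%N) => N eN.
elim: N a b m Pa Pb e eN => [|N IH] a b m Pa Pb e eN.
  have m0 : forall i, m i = 0%N.
    move=> i; move: eN => /eqP; rewrite sum_nat_eq0 => /forallP /(_ i) /implyP.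
    by move=> /(_ isT) /eqP.
  have : b - a = 0 by rewrite e big1 // => i _; rewrite m0 scale0r.
  by move/eqP; rewrite subr_eq0 => /eqP ->.
have bnz : b - a != 0.
  apply/negP => /eqP h0.
  have : comb (fun i => (m i)%:R) = 0 by rewrite -e h0.
  move/free_coef => mz.
  have : (\sum_i m i = 0)%N.
    by apply: big1 => i _; apply/eqP; rewrite -(pnatr_eq0 R); apply/eqP; exact: mz.
  by rewrite eN.
have : 0 < \sum_(i < size S) (m i)%:R * dotv S`_i (b - a).
  rewrite (eq_bigr (fun i => dotv ((m i)%:R *: S`_i) (b - a))); last by move=> i _; rewrite dotvZl.
  by rewrite -dotv_sum -e dotv_gt0.
move/exists_pos_term => [i hi].
have mi : (0 < m i)%N by move: hi; case: (m i) => //; rewrite mul0r ltxx.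
have dsi : 0 < dotv S`_i (b - a) by move: hi; rewrite pmulr_rgt0 // ltr0n.
have sS : S`_i \in S := mem_nth 0 (ltn_ord i).
have sPhi : S`_i \in Phi by case: SS => sub _ _; exact: sub.
pose m' := fun j => (m j - (j == i))%N.
have em' : comb (fun j => (m j)%:R) - S`_i = comb (fun j => (m' j)%:R).
  rewrite -comb_delta combN combD; apply: eq_bigr => j _; congr (_ *: _).
  rewrite /m' /delta; have [->|nji] := eqVneq j i; first by rewrite natrB.
  by rewrite subn0 subr0.
have eN' : (\sum_j m' j)%N = N.
  rewrite (bigD1 i) //= in eN; rewrite (bigD1 i) //= /m' eqxx /=.
  rewrite (eq_bigr m); last by move=> j /negbTE ->; rewrite subn0.
  lia.
have [Ha [c [c0 ec]]] := Pa.
have [bs|bs] := ltP 0 (dotv b S`_i).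
  have [ebs|nbs] := eqVneq b S`_i.
    exfalso.
    have : comb (fun j => delta i j - c j - (m j)%:R) = 0.
      have -> : comb (fun j => delta i j - c j - (m j)%:R) =
        comb (delta i) + comb (fun j => - c j) + comb (fun j => - (m j)%:R) by rewrite !combD.
      by rewrite -!combN comb_delta -ec -e ebs subrr.
    move/free_coef => h.
    have c00 : forall j, c j = 0.
      move=> j; have := h j; have := c0 j; have : 0 <= ((m j)%:R : R) by [].
      rewrite /delta; have [->|nji] := eqVneq j i.
        have h1 : 1 <= ((m i)%:R : R) by rewrite ler1n.
        move=> /=; lra.
      by move=> /=; lra.
    by move: (root_neq0 Ha); rewrite ec big1 ?eqxx // => j _; rewrite c00 scale0r.
  have Hbs : b - S`_i \in Phi by exact: diff_root (P_root Pb) sPhi bs nbs.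
  have ebs : b - S`_i - a = comb (fun j => (m' j)%:R) by rewrite -em' -e addrAC.
  have Pbs : P (b - S`_i).
    split => //; have -> : b - S`_i = a + comb (fun j => (m' j)%:R) by rewrite -ebs [a + _]addrC subrK.
    by apply: nnD; [exists c|apply: nn_nat].
  move=> Ub; apply: (IH a (b - S`_i) m') => //; exact: cl.
have sa : dotv a S`_i < 0 by move: dsi bs; rewrite dotvBr (dotvC S`_i a) (dotvC S`_i b); lra.
have nas : a != - S`_i.
  by apply/eqP => eas; apply: (not_pos_neg (S_P sS)); rewrite -eas.
have Has : a + S`_i \in Phi.
  by rewrite -[S`_i]opprK; apply: diff_root => //; [exact: rootN|rewrite dotvNr oppr_gt0].
have eas : b - (a + S`_i) = comb (fun j => (m' j)%:R) by rewrite -em' -e opprD addrA.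
have Pas : P (a + S`_i) by split => //; apply: nnD; [exists c|exact: (S_P sS).2].
move=> Ub; have := IH (a + S`_i) b m' Pas Pb eas eN' Ub.
move/(cl _ _ ^~ sS); rewrite addrK; exact.
Qed.

Section Chain.
Variables (k : nat) (I : nat -> set 'rV[R]_n).
Hypothesis k0 : (0 < k)%N.
Hypothesis GC : is_geometric_chain P S k I.

Local Notation J := (Jext P I k).

Lemma Isub i : (1 <= i <= k)%N -> I i `<=` P.
Proof. by case: GC => hid _ _ _ /hid []. Qed.

Lemma Imono i j : (1 <= i)%N -> (i <= j)%N -> (j <= k)%N -> I i `<=` I j.
Proof.
move=> i1 ij jk; elim: j ij jk => [|j IH] ij jk; first by have := leq_trans i1 ij.
have [eij|nij] := eqVneq i j.+1; first by rewrite eij.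
have ij' : (i <= j)%N by move: ij nij; rewrite leq_eqVlt => /orP [/eqP ->|]; rewrite ?eqxx.
case: GC => _ hs _ _; apply: subset_trans (IH ij' (ltnW jk)) (hs j _).
by rewrite jk andbT; exact: leq_trans ij'.
Qed.

Lemma JE m x : (1 <= m <= k)%N -> J m x <-> P x /\ ~ I m x.
Proof.
move=> /andP [m1 mk]; rewrite /Jext; have -> : (m == 0)%N = false by case: m m1 {mk}.
by rewrite (minn_idPl mk).
Qed.

Lemma JkE m x : (k <= m)%N -> J m x <-> P x /\ ~ I k x.
Proof.
move=> km; rewrite /Jext; have -> : (m == 0)%N = false by apply/negbTE; rewrite -lt0n; lia.
by rewrite (minn_idPr km).
Qed.

Lemma J0 x : J 0 x <-> P x. Proof. by []. Qed.

Lemma JP m x : J m x -> P x.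
Proof. by rewrite /Jext; case: (m == 0)%N => // -[]. Qed.

Lemma LJ p i x : (1 <= p <= k)%N -> (i <= k)%N -> I p x -> J i x -> (i < p)%N.
Proof.
move=> /andP [p1 pk] ik Ix; case: i ik => [//|i] ik.
move/JE => /(_ ik) [_ nI]; rewrite ltnNge; apply/negP => pi.
by apply: nI; apply: (Imono p1 pi ik).
Qed.

Lemma JI m x : (1 <= m <= k)%N -> P x -> ~ J m x -> I m x.
Proof.
move=> hm Px nJ; case: (pselect (I m x)) => // nI; exfalso; apply: nJ.
by apply/JE.
Qed.

Lemma Jsum i j a b : (i <= k)%N -> (j <= k)%N -> J i a -> J j b -> P (a + b) ->
  J (i + j) (a + b).
Proof.
move=> ik jk Ja Jb Pab; case: GC => _ _ _ hJ; apply: (hJ i j ik jk); split => //.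
by exists a, b.
Qed.

Lemma Isum i j a b : (1 <= i)%N -> (1 <= j)%N -> (i + j <= k)%N -> I i a -> I j b ->
  P (a + b) -> I (i + j) (a + b).
Proof.
move=> i1 j1 ijk Ia Ib Pab; case: GC => _ _ hI _.
have := hI i j ijk (a + b); rewrite /Iext.
have -> : (i + j == 0)%N = false by case: i i1 {ijk Ia}.
apply; split => //; exists a, b; split => //.
- by case: i i1 {ijk} Ia.
- by case: j j1 {ijk} Ib.
Qed.

Definition Ubar := underline_chain P S k I k.+1.

Lemma UbarE x : Ubar x <->
  (exists p q c d, [/\ (1 <= p <= k)%N, (1 <= q <= k)%N, (p + q = k.+1)%N,
      I p c & I q d] /\ x = c + d /\ P x) \/ I k x \/ x \in S.
Proof.
rewrite /Ubar /underline_chain eqxx; split.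
  case=> [[[p [q [pk qk pq [[c [d [Ic Id e]]] Px]]]]|Ik]|xS]; [left|right;left|right;right] => //.
  exists p, q, c, d; move: Ic Id; rewrite /Iext.
  case: p pk pq => [|p] //= pk pq; case: q qk pq => [|q] //= qk pq Ic Id.
case=> [[p [q [c [d [[/andP[p1 pk] /andP[q1 qk] pq Ic Id] [e Px]]]]]]|[Ik|xS]];
  [left;left|left;right|right] => //.
exists p, q; split => //; split => //; exists c, d; split => //; rewrite /Iext.
- by case: p p1 {pk pq} Ic.
- by case: q q1 {qk pq} Id.
Qed.

Lemma Ik_Ubar x : I k x -> Ubar x. Proof. by move=> h; apply/UbarE; right; left. Qed.
Lemma S_Ubar x : x \in S -> Ubar x. Proof. by move=> h; apply/UbarE; right; right. Qed.

Lemma Ubar_sub x : Ubar x -> P x.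
Proof.
move/UbarE => [[p [q [c [d [_ [_ Px]]]]]]|[Ik|xS]] //.
- by apply: (Isub _ Ik); rewrite k0 leqnn.
- exact: S_P.
Qed.

Lemma core a b c d i j p q : (i <= k)%N -> (j <= k)%N -> (k.+1 <= i + j)%N ->
  (1 <= p <= k)%N -> (1 <= q <= k)%N -> (p + q = k.+1)%N ->
  J i a -> J j b -> I p c -> I q d -> a + b = c + d ->
  (a = c \/ a - c \in Phi) -> False.
Proof.
move=> ik jk ijk pk qk pq Ja Jb Ic Id e.
have Pc := Isub pk Ic; have Pd := Isub qk Id.
have Pa := JP Ja; have Pb := JP Jb.
case=> [ac|Hec].
  have bd : b = d by move: e; rewrite ac => /addrI.
  have := LJ pk ik Ic; rewrite -ac => /(_ Ja).
  have := LJ qk jk Id; rewrite -bd => /(_ Jb).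
  lia.
case: (root_posneg Hec) => [Pe|Pe].
  have ed : d = b + (a - c) by rewrite (_ : b + (a - c) = a + b - c); [rewrite e; vring|vring].
  have Pbe : P (b + (a - c)) by rewrite -ed.
  have Jjd : J j d by have := Jsum jk (leq0n k) Jb (Pe : J 0 _) Pbe; rewrite -ed addn0.
  have jq := LJ qk jk Id Jjd.
  have m1 : (1 <= q - j <= k)%N by case/andP: qk; lia.
  have mk : (q - j <= k)%N by case/andP: m1.
  have Im : I (q - j) (a - c).
    apply: JI => // Jm; have := Jsum jk mk Jb Jm Pbe; rewrite -ed.
    have -> : (j + (q - j) = q)%N by lia.
    by move=> Jq; have := LJ qk (proj2 (andP qk)) Id Jq; rewrite ltnn.
  have e1 : c + (a - c) = a by vring.
  have p1 : (1 <= p)%N by case/andP: pk.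
  have pmk : (p + (q - j) <= k)%N by case/andP: pk; case/andP: qk; lia.
  have := Isum p1 (proj1 (andP m1)) pmk Ic Im; rewrite e1 => /(_ Pa) Ia.
  have := LJ (_ : (1 <= p + (q - j) <= k)%N) ik Ia Ja.
  case/andP: pk; case/andP: qk; move=> q1 qk' p1' pk'.
  have hh : (1 <= p + (q - j) <= k)%N by lia.
  move=> /(_ hh); lia.
have e2 : a + - (a - c) = c by vring.
have e3 : d + - (a - c) = b by rewrite (_ : d + - (a - c) = c + d - a); [rewrite -e; vring|vring].
have Pae : P (a + - (a - c)) by rewrite e2.
have Jic : J i c by have := Jsum ik (leq0n k) Ja (Pe : J 0 _) Pae; rewrite e2 addn0.
have ip := LJ pk ik Ic Jic.
have m1 : (1 <= p - i <= k)%N by case/andP: pk; lia.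
have mk : (p - i <= k)%N by case/andP: m1.
have Im : I (p - i) (- (a - c)).
  apply: JI => // Jm; have := Jsum ik mk Ja Jm Pae; rewrite e2.
  have -> : (i + (p - i) = p)%N by lia.
  by move=> Jp; have := LJ pk (proj2 (andP pk)) Ic Jp; rewrite ltnn.
have q1 : (1 <= q)%N by case/andP: qk.
have qmk : (q + (p - i) <= k)%N by case/andP: pk; case/andP: qk; lia.
have Pde : P (d + - (a - c)) by rewrite e3.
have := Isum q1 (proj1 (andP m1)) qmk Id Im Pde; rewrite e3 => Ib.
have hh : (1 <= q + (p - i) <= k)%N by case/andP: pk; case/andP: qk; lia.
have := LJ hh jk Ib Jb.
case/andP: pk; case/andP: qk; lia.
Qed.

Lemma ML a b i j : (i <= k)%N -> (j <= k)%N -> (k.+1 <= i + j)%N ->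
  J i a -> J j b -> P (a + b) -> ~ Ubar (a + b).
Proof.
move=> ik jk ijk Ja Jb Pab.
have Pa := JP Ja; have Pb := JP Jb.
move/UbarE => [[p [q [c [d [[pk qk pq Ic Id] [e _]]]]]]|[Ik|xS]].
- have Pc := Isub pk Ic; have Pd := Isub qk Id.
  case: (pairing (P_root Pa) (P_root Pb) (P_root Pc) (P_root Pd) e (P_neq0 Pab)) => h.
    exact: (core ik jk ijk pk qk pq Ja Jb Ic Id e h).
  apply: (core ik jk ijk qk pk _ Ja Jb Id Ic _ h); first by rewrite addnC.
  by rewrite e addrC.
- have := Jsum ik jk Ja Jb Pab; move/(JkE _ (ltnW ijk)) => [_]; apply; exact: Ik.
- exact: sum_not_simple Pa Pb xS.
Qed.

Lemma core0 a b c d p q : (1 <= p <= k)%N -> (1 <= q <= k)%N -> (p + q = k.+1)%N ->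
  P a -> ~ Ubar a -> P b -> I p c -> I q d -> a + b = c + d ->
  (a = c \/ a - c \in Phi) -> False.
Proof.
move=> pk qk pq Pa nU Pb Ic Id e.
have kk : (1 <= k <= k)%N by rewrite k0 leqnn.
have Jka : J k a by apply/JE => //; split => // h; apply: nU; exact: Ik_Ubar.
have Pc := Isub pk Ic; have Pd := Isub qk Id.
case=> [ac|Hec].
  by have := LJ pk (leqnn k) Ic; rewrite -ac => /(_ Jka); case/andP: pk; lia.
case: (root_posneg Hec) => [Pe|Pe].
  have ed : d = b + (a - c) by rewrite (_ : b + (a - c) = a + b - c); [rewrite e; vring|vring].
  have Pbe : P (b + (a - c)) by rewrite -ed.
  have Iq : I q (a - c).
    apply: JI => // Jq; have := Jsum (leq0n k) (proj2 (andP qk)) (Pb : J 0 _) Jq Pbe.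
    by rewrite -ed add0n => Jd; have := LJ qk (proj2 (andP qk)) Id Jd; rewrite ltnn.
  apply: nU; apply/UbarE; left; exists p, q, c, (a - c); split => //; split => //.
  by vring.
have e2 : a + - (a - c) = c by vring.
have Pae : P (a + - (a - c)) by rewrite e2.
have := Jsum (leqnn k) (leq0n k) Jka (Pe : J 0 _) Pae; rewrite e2 addn0 => Jkc.
by have := LJ pk (leqnn k) Ic Jkc; case/andP: pk; lia.
Qed.

Lemma ML0 a b : P a -> ~ Ubar a -> P b -> P (a + b) -> ~ Ubar (a + b).
Proof.
move=> Pa nU Pb Pab.
have kk : (1 <= k <= k)%N by rewrite k0 leqnn.
have Jka : J k a by apply/JE => //; split => // h; apply: nU; exact: Ik_Ubar.
move/UbarE => [[p [q [c [d [[pk qk pq Ic Id] [e _]]]]]]|[Ik|xS]].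
- have Pc := Isub pk Ic; have Pd := Isub qk Id.
  case: (pairing (P_root Pa) (P_root Pb) (P_root Pc) (P_root Pd) e (P_neq0 Pab)) => h.
    exact: (core0 pk qk pq Pa nU Pb Ic Id e h).
  apply: (core0 qk pk _ Pa nU Pb Id Ic _ h); first by rewrite addnC.
  by rewrite e addrC.
- have := Jsum (leqnn k) (leq0n k) Jka (Pb : J 0 _) Pab; rewrite addn0.
  by move/(JE _ kk) => [_]; apply.
- exact: sum_not_simple Pa Pb xS.
Qed.

Lemma ustep_core b s c d p q : (1 <= p <= k)%N -> (1 <= q <= k)%N -> (p + q = k.+1)%N ->
  I p c -> I q d -> b = c + d -> s \in S -> P (b - s) ->
  (b - s = c \/ b - s - c \in Phi) -> Ubar (b - s).
Proof.
move=> pk qk pq Ic Id eb sS Pbs.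
have Pc := Isub pk Ic; have Pd := Isub qk Id; have Ps := S_P sS.
case=> [bc|Hec].
  by rewrite bc; apply: Ik_Ubar; case/andP: pk => p1 pk'; exact: (Imono p1 pk' (leqnn k) Ic).
case: (root_posneg Hec) => [Pe|Pe].
  have de : d = b - s - c + s by rewrite eb; vring.
  have Pes : P (b - s - c + s) by rewrite -de.
  have Iq : I q (b - s - c).
    apply: JI => // Jq; have := Jsum (proj2 (andP qk)) (leq0n k) Jq (Ps : J 0 _) Pes.
    by rewrite -de addn0 => Jd; have := LJ qk (proj2 (andP qk)) Id Jd; rewrite ltnn.
  apply/UbarE; left; exists p, q, c, (b - s - c); split => //; split => //.
  by vring.
exfalso; apply: (sum_not_simple Pd Pe).
by rewrite (_ : d + - (b - s - c) = s) //; rewrite eb; vring.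
Qed.

Lemma ustep b s : Ubar b -> s \in S -> P (b - s) -> Ubar (b - s).
Proof.
move=> Ub sS Pbs; have Ps := S_P sS.
have Pb : P b by exact: Ubar_sub.
move: Ub => /UbarE [[p [q [c [d [[pk qk pq Ic Id] [e _]]]]]]|[Ik|xS]].
- have Pc := Isub pk Ic; have Pd := Isub qk Id.
  have e' : b - s + s = c + d by rewrite subrK.
  have nz : b - s + s != 0 by rewrite subrK; exact: P_neq0.
  case: (pairing (P_root Pbs) (P_root Ps) (P_root Pc) (P_root Pd) e' nz) => h.
    exact: (ustep_core pk qk pq Ic Id e sS Pbs h).
  apply: (ustep_core qk pk _ Id Ic _ sS Pbs h); first by rewrite addnC.
  by rewrite e addrC.
- have kk : (1 <= k <= k)%N by rewrite k0 leqnn.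
  apply: Ik_Ubar; apply: JI => // Jk.
  have := Jsum (leqnn k) (leq0n k) Jk (Ps : J 0 _); rewrite subrK addn0 => /(_ Pb) Jkb.
  by have := LJ kk (leqnn k) Ik Jkb; rewrite ltnn.
- by exfalso; apply: (sum_not_simple Pbs Ps); rewrite subrK.
Qed.



Local Notation Iu := (underline_chain P S k I).

Lemma IuE m : m != k.+1 -> Iu m = I m.
Proof. by rewrite /underline_chain => /negbTE ->. Qed.

Lemma Ju_J m x : (m <= k.+1)%N -> Jext P Iu k.+1 m x -> J (minn m k) x.
Proof.
move=> mk; unfold Jext; case: m mk => [|m] mk; first by rewrite !min0n => h; exact h.
rewrite (minn_idPl mk).
have -> : (m.+1 == 0)%N = false by [].
have [mk'|km] := leqP m.+1 k.
  rewrite (minn_idPl mk') ?(minn_idPl mk') IuE ?neq_ltn ?ltnS ?mk' //.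
have em : m.+1 = k.+1 by apply/eqP; rewrite eqn_leq mk km.
rewrite em minnn => -[Px nU].
have -> : (k == 0)%N = false by rewrite eqn0Ngt k0.
by split => // h; apply: nU; exact: Ik_Ubar.
Qed.

Lemma J_Ju m x : (m <= k)%N -> J m x -> Jext P Iu k.+1 m x.
Proof.
move=> mk; unfold Jext; case: m mk => [//|m] mk.
rewrite (minn_idPl mk) (minn_idPl (leqW mk)) IuE //.
by rewrite neq_ltn ltnS mk.
Qed.

Lemma Ju_big m x : (k.+1 <= m)%N -> Jext P Iu k.+1 m x <-> P x /\ ~ Ubar x.
Proof.
move=> km; unfold Jext; have -> : (m == 0)%N = false by case: m km.
by rewrite (minn_idPr km).
Qed.

Lemma Iu_geometric : is_geometric_chain P S k.+1 Iu.
Proof.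
split.
- move=> i /andP [i1 ik]; have [->|ne] := eqVneq i k.+1.
    split; first exact: Ubar_sub.
    move=> a b Pa Pb le Ub; exact: (chain_down ustep Pa Pb le Ub).
  rewrite IuE //; case: GC => hid _ _ _; apply: hid.
  by rewrite i1 -ltnS ltn_neqAle ne ik.
- move=> i /andP [i1 ik]; rewrite IuE ?neq_ltn ?ik //.
  have [ek|ne] := eqVneq i.+1 k.+1.
    by move: ek => [->] x; exact: Ik_Ubar.
  rewrite IuE //; case: GC => _ hs _ _; apply: hs.
  by rewrite i1 -ltnS ltn_neqAle ne ik.
- move=> i j ijk x [[a [b [Ia Ib ->]]] Pab].
  case: i ijk Ia => [|i] ijk Ia; first by [].
  case: j ijk Ib => [|j] ijk Ib; first by [].
  rewrite /Iext /= in Ia Ib *.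
  rewrite IuE in Ia; last by rewrite neq_ltn ltnS; apply/orP; left; lia.
  rewrite IuE in Ib; last by rewrite neq_ltn ltnS; apply/orP; left; lia.
  have [ijk'|ijk'] := leqP (i.+1 + j.+1) k.
    rewrite IuE; last by rewrite neq_ltn ltnS; apply/orP; left; lia.
    by apply: (Isum _ _ ijk').
  have -> : (i.+1 + j.+1 = k.+1)%N by lia.
  apply/UbarE; left; exists i.+1, j.+1, a, b; split => //; split => //.
  by apply/andP; split => //; lia.
  by apply/andP; split => //; lia.
  lia.
- move=> i j ik jk x [[a [b [Ja Jb ->]]] Pab].
  have [ijk|ijk] := leqP (i + j) k.
    have ik' : (i <= k)%N by lia.
    have jk' : (j <= k)%N by lia.
    have Ja' : J i a by move: (Ju_J ik Ja); rewrite (minn_idPl ik').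
    have Jb' : J j b by move: (Ju_J jk Jb); rewrite (minn_idPl jk').
    by apply: J_Ju => //; exact: Jsum ik' jk' Ja' Jb' Pab.
  apply/(Ju_big _ ijk); split => //.
  case: i ik ijk Ja => [|i] ik ijk Ja.
    rewrite add0n in ijk; have /(Ju_big _ ijk) [Pb nUb] := Jb.
    by rewrite addrC; apply: ML0 => //; try exact: (Ja : P a); rewrite addrC.
  case: j jk ijk Jb => [|j] jk ijk Jb.
    rewrite addn0 in ijk; have /(Ju_big _ ijk) [Pa nUa] := Ja.
    by apply: ML0 => //; exact: (Jb : P b).
  apply: (ML (i := minn i.+1 k) (j := minn j.+1 k)); rewrite ?geq_minr //.
  - by move: ijk; rewrite /minn; case: ifP; case: ifP; lia.
  - exact: Ju_J Ja.
  - exact: Ju_J Jb.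
Qed.

Lemma Iu_positive : is_positive_chain S k.+1 Iu.
Proof. by move=> x /= xS; exact: S_Ubar. Qed.

End Chain.
End Roots.

Section Topo.
Variables (R : realType) (n : nat).
Local Notation V := 'rV[R]_n.

Lemma dotv_cont (a : V) : continuous (fun x : V => dotv x a).
Proof.
rewrite /dotv; elim: (index_enum _) => [|i r IH].
  have -> : (fun x : V => \sum_(i <- [::]) x 0 i * a 0 i) = fun=> 0.
    by apply: funext => x; rewrite big_nil.
  exact: cst_continuous.
have -> : (fun x : V => \sum_(j <- i :: r) x 0 j * a 0 j) =
  (fun x : V => x 0 i * a 0 i) + (fun x : V => \sum_(j <- r) x 0 j * a 0 j).
  by apply: funext => x; rewrite big_cons.
move=> x; apply: continuousD; last exact: IH.
apply: continuousM; last exact: cst_continuous.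
exact: coord_continuous.
Qed.

Lemma conn_strict (A : set V) (f : V -> R) (c : R) : connected A -> continuous f ->
  (forall x, A x -> f x != c) -> (exists x0, A x0 /\ c <= f x0) ->
  forall x, A x -> c < f x.
Proof.
move=> cA cf nc [x0 [Ax0 fx0]] x Ax.
have := connected_continuous_connected cA (continuous_subspaceT cf).
move/connected_intervalP => hi.
rewrite ltNge; apply/negP => fxc.
have : (f @` A) c.
  apply: (hi (f x) (f x0)); [by exists x|by exists x0|by rewrite fxc fx0].
by case=> y Ay fyc; move: (nc y Ay); rewrite fyc eqxx.
Qed.

Lemma seg_cont (y z : V) : continuous (fun t : R => y + t *: (z - y)).
Proof.
move=> t; apply: (@continuousD _ _ _ (fun=> y) (fun t : R => t *: (z - y))).
  exact: cst_continuous.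
apply: (@continuousZ _ _ _ (fun t : R => t) (fun=> z - y)).
  by [].
exact: cst_continuous.
Qed.

End Topo.

Section Cell.
Variables (R : realType) (n : nat) (Phi S : seq 'rV[R]_n).
Hypothesis RS : is_root_system Phi.
Hypothesis SS : is_simple_system Phi S.
Variables (k : nat) (I : nat -> set 'rV[R]_n).
Local Notation P := (pos_roots Phi S).

Definition cell := [set x : 'rV[R]_n | (forall a, P a -> 0 < dotv x a) /\
  forall i a, (1 <= i <= k)%N -> P a ->
    (I i a -> dotv x a < i%:R) /\ (~ I i a -> i%:R < dotv x a)].

Lemma cell_compl : cell `<=` catalan_compl Phi k.
Proof.
move=> x [hpos hI] a Ha r rk; case: (root_posneg RS SS Ha) => Pa.
  case: r rk => [|r] rk; first by rewrite (gt_eqF (hpos a Pa)).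
  have rk' : (1 <= r.+1 <= k)%N by rewrite rk.
  have [h1 h2] := hI r.+1 a rk' Pa.
  by case: (pselect (I r.+1 a)) => h; [rewrite lt_eqF // h1|rewrite gt_eqF // h2].
have := hpos _ Pa; rewrite dotvNr oppr_gt0 => h.
by rewrite lt_eqF //; apply: lt_le_trans h _.
Qed.

Lemma convex_lt (u v t c : R) : 0 <= t -> t <= 1 -> u < c -> v < c -> u + t * (v - u) < c.
Proof.
move=> t0 t1 hu hv; rewrite -subr_gt0.
have -> : c - (u + t * (v - u)) = (1 - t) * (c - u) + t * (c - v) by ring.
have h1 : 0 <= (1 - t) * (c - u) by rewrite mulr_ge0 // subr_ge0 // ltW.
have [->|tn] := eqVneq t 0; first by rewrite subr0 mul1r mul0r addr0 subr_gt0.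
have h2 : 0 < t * (c - v) by rewrite mulr_gt0 // ?subr_gt0 // lt_neqAle eq_sym tn.
by apply: lt_le_trans h2 _; rewrite lerDr.
Qed.
Lemma convex_gt (u v t c : R) : 0 <= t -> t <= 1 -> c < u -> c < v -> c < u + t * (v - u).
Proof.
move=> t0 t1 hu hv.
have := convex_lt t0 t1 (_ : -u < -c) (_ : -v < -c); rewrite ?ltrN2 // => h.
rewrite -ltrN2 (_ : -(u + t * (v - u)) = -u + t * (-v - -u)); [exact: h|ring].
Qed.

Lemma cell_convex y z t : cell y -> cell z -> 0 <= t <= 1 ->
  cell (y + t *: (z - y)).
Proof.
move=> [yp yI] [zp zI] /andP [t0 t1].
have E a : dotv (y + t *: (z - y)) a = dotv y a + t * (dotv z a - dotv y a).
  by rewrite dotvDl dotvZl dotvBl.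
split.
  by move=> a Pa; rewrite E; apply: convex_gt => //; [exact: yp|exact: zp].
move=> i a ik Pa; rewrite E; have [y1 y2] := yI i a ik Pa; have [z1 z2] := zI i a ik Pa.
split.
  by move=> h; apply: convex_lt => //; [exact: y1|exact: z1].
by move=> h; apply: convex_gt => //; [exact: y2|exact: z2].
Qed.

Lemma region_in_cell K Rg : (k <= K)%N -> is_region Phi K Rg -> is_dominant P Rg ->
  (forall i, (1 <= i <= k)%N -> theta P Rg i = I i) -> Rg `<=` cell.
Proof.
move=> kK [x1 [cx1 eRg]] dom th x Rx; split; first by move=> a Pa; exact: dom x Rx a Pa.
move=> i a ik Pa; split.
  move=> Ia; have [_ h] : theta P Rg i a by rewrite th.
  exact: h x Rx.
move=> nIa; move: x Rx; rewrite eRg.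
have cc : connected (connected_component (catalan_compl Phi K) x1).
  exact: component_connected.
have H := conn_strict (A := connected_component (catalan_compl Phi K) x1)
  (f := fun x => dotv x a) (c := i%:R) cc (dotv_cont (a:=a)).
apply: H.
  move=> y /connected_component_sub h; apply: h; first exact: (P_root Pa).
  by case/andP: ik => _ ik; exact: leq_trans ik kK.
case: (pselect (exists y, Rg y /\ i%:R <= dotv y a)) => [[y [Ry hy]]|nex].
  by exists y; rewrite -eRg.
exfalso; apply: nIa; rewrite -th //; split => // y Ry; rewrite ltNge; apply/negP => hy.
by apply: nex; exists y.
Qed.

End Cell.

Unset Implicit Arguments.

Theorem lemma9 (R : realType) (n : nat) (Phi S : seq 'rV[R]_n) (k : nat)
    (I : nat -> set 'rV[R]_n) :
  is_root_system Phi -> irreducible_rs Phi -> is_simple_system Phi S ->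
  (0 < k)%N ->
  is_geometric_chain (pos_roots Phi S) S k I ->
  let P := pos_roots Phi S in
  let Iu := underline_chain P S k I in
  [/\ is_geometric_chain P S k.+1 Iu,
      is_positive_chain S k.+1 Iu &
      forall Rb Rg : set 'rV[R]_n,
        is_region Phi k.+1 Rb -> is_dominant P Rb ->
        (forall i, (1 <= i <= k.+1)%N -> theta P Rb i = Iu i) ->
        is_region Phi k Rg -> is_dominant P Rg ->
        (forall i, (1 <= i <= k)%N -> theta P Rg i = I i) ->
        Rb `<=` Rg].
Proof.
move=> RS _ SS k0 GC P Iu; split.
- exact: Iu_geometric.
- exact: Iu_positive.
move=> Rb Rg hRb domb thb0 hRg domg thg.
have thb : forall i, (1 <= i <= k)%N -> theta P Rb i = I i.
  move=> i /andP [i1 ik]; rewrite thb0 ?i1 ?(leqW ik) //.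
  by rewrite /Iu /underline_chain (negbTE (_ : i != k.+1)) // neq_ltn ltnS ik.
have CbC := region_in_cell (leqnSn k) hRb domb thb.
have CgC := region_in_cell (leqnn k) hRg domg thg.
have [y [cy eRg]] := hRg.
move=> z Rz; have Cz := CbC z Rz.
have Cy : cell Phi S k I y by apply: CgC; rewrite eRg; exact: connected_component_refl.
pose g := fun t : R => y + t *: (z - y).
have Gconn : connected (g @` `[0, 1]).
  apply: connected_continuous_connected; first exact: segment_connected.
  apply: continuous_subspaceT; exact: seg_cont.
have Gsub : g @` `[0, 1] `<=` catalan_compl Phi k.
  move=> w [t t01 <-]; apply: (cell_compl (I := I) RS SS); rewrite /g; apply: cell_convex => //.
have g0 : (g @` `[0, 1]) y.
  by exists 0; [rewrite /= in_itv /= lexx ler01|rewrite /g scale0r addr0].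
rewrite eRg; apply: (connected_component_max g0 Gsub Gconn).
by exists 1; [rewrite /= in_itv /= lexx ler01|rewrite /g scale1r addrCA subrr addr0].
Qed.
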